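(* Let $G$ be a $d$-regular graph ($d>1$) that has a good signing. Then the lexicographic product $G\circ\overline{K_4}$ has a good signing, i.e. there is an edge-signing $\sigma'$ of $G\circ\overline{K_4}$ such that every eigenvalue of its signed adjacency matrix has absolute value at most $2\sqrt{4d-1}$.
   Context: For an edge-signing $\sigma: E(H)\to\{-1,1\}$ of a graph $H$, the signed adjacency matrix $A^{\sigma}$ has $(i,j)$ entry $\sigma(ij)$ if $ij\in E(H)$ and $0$ otherwise. A good signing of a $D$-regular graph is a signing all of whose signed adjacency eigenvalues have absolute value at most $2\sqrt{D-1}$; $G\circ\overline{K_4}$ is $4d$-regular. $\overline{K_4}$ is the edgeless graph on four vertices. The lexicographic product $G\circ H$ has vertex set $V(G)\times V(H)$, with $(x,y)$ adjacent to $(z,t)$ iff $xz\in E(G)$, or $x=z$ and $yt\in E(H)$. *)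

(* Defs.v *)
From mathcomp Require Import all_boot all_order all_algebra all_field.
Set Implicit Arguments. Unset Strict Implicit. Unset Printing Implicit Defensive.
Import Order.TTheory GRing.Theory Num.Theory.
Local Open Scope ring_scope.

Definition simple_graph (V : finType) (adj : rel V) : Prop :=
  (forall x y, adj x y = adj y x) /\ (forall x, ~~ adj x x).

Definition regular (V : finType) (adj : rel V) (D : nat) : Prop :=
  forall x, #|[set y | adj x y]| = D.

(* An edge-signing: a sign attached to each (unordered) edge; represented as
   a symmetric function on pairs, whose values on edges are +1 or -1
   (values off edges are irrelevant). *)
Definition signing (V : finType) (adj : rel V) (s : V -> V -> bool) : Prop :=
  forall x y, adj x y -> s x y = s y x.

Definition signed_adj (V : finType) (adj : rel V) (s : V -> V -> bool)
  : 'M[algC]_#|V| :=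
  \matrix_(i, j) (if adj (enum_val i) (enum_val j)
                  then (-1) ^+ s (enum_val i) (enum_val j) else 0).

Definition good_signing (V : finType) (adj : rel V) (D : nat)
  (s : V -> V -> bool) : Prop :=
  signing adj s /\
  forall lam : algC, eigenvalue (signed_adj adj s) lam ->
    `|lam| <= 2 * sqrtC (D%:R - 1).

Definition has_good_signing (V : finType) (adj : rel V) (D : nat) : Prop :=
  exists s, good_signing adj D s.

Definition lex_adj (V W : finType) (adjG : rel V) (adjH : rel W) : rel (V * W) :=
  fun p q => adjG p.1 q.1 || ((p.1 == q.1) && adjH p.2 q.2).

Definition K4bar_adj : rel 'I_4 := fun _ _ => false.

(* Main.v *)
Require Import Defs.
From mathcomp Require Import all_boot all_order all_algebra all_field.
From mathcomp Require Import ring.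
From Stdlib Require Import Classical.
Set Implicit Arguments. Unset Strict Implicit. Unset Printing Implicit Defensive.
Import Order.TTheory GRing.Theory Num.Theory.
Local Open Scope ring_scope.

Definition tt4 (i j : 'I_4) : bool := (odd i && odd j) (+) ((1 < i)%N && (1 < j)%N).
Definition tau (i j : 'I_4) : algC := (-1) ^+ tt4 i j.

Lemma tt4C i j : tt4 i j = tt4 j i.
Proof. by rewrite /tt4 andbC [(1 < j)%N && _]andbC. Qed.

Lemma tau_orth (i k : 'I_4) : \sum_j tau i j * tau j k = if i == k then 4 else 0.
Proof.
rewrite !big_ord_recl big_ord0 /tau /tt4.
case: i => [[|[|[|[|i]]]] Hi] //; case: k => [[|[|[|[|k]]]] Hk] //=;
rewrite /bump /= ?expr0 ?expr1 ?mulr1 ?mul1r ?mulrNN ?mulr1 ?mulN1r ?mulrN1 ?opprK.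

all: ring.
Qed.
Definition sa (V : finType) (adj : rel V) (s : V -> V -> bool) (x z : V) : algC :=
  if adj x z then (-1) ^+ s x z else 0.

Lemma sum_rank (V : finType) (g : 'I_#|V| -> algC) :
  \sum_(i < #|V|) g i = \sum_(x : V) g (enum_rank x).
Proof. by rewrite (reindex enum_rank) //; apply: onW_bij; apply: enum_rank_bij. Qed.

Lemma eig_fun (V : finType) (adj : rel V) s (lam : algC) :
  eigenvalue (signed_adj adj s) lam <->
  exists f : V -> algC, (exists x, f x != 0) /\
     forall z, \sum_x f x * sa adj s x z = lam * f z.
Proof.
split.
  move/eigenvalueP=> [v Hv vn0].
  exists (fun x => v 0 (enum_rank x)); split.
    apply/existsP; apply: contraR vn0 => /existsPn H.
    apply/eqP/rowP => i; rewrite mxE; apply/eqP.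
    by have := H (enum_val i); rewrite enum_valK negbK.
  move=> z; move/rowP: Hv => /(_ (enum_rank z)); rewrite !mxE => <-.
  rewrite sum_rank; apply: eq_bigr => x _; rewrite /signed_adj mxE !enum_rankK.
  by [].
move=> [f [[x0 fx0] Hf]]; apply/eigenvalueP.
exists (\row_i f (enum_val i)).
  apply/rowP => j; rewrite !mxE sum_rank.
  rewrite -[in RHS](enum_rankK (enum_val j)) -Hf enum_valK.
  by apply: eq_bigr => x _; rewrite !mxE !enum_rankK.
apply/eqP => /rowP /(_ (enum_rank x0)); rewrite !mxE enum_rankK => /eqP.
by rewrite (negbTE fx0).
Qed.

Section Main.
Variables (V : finType) (adj : rel V) (s : V -> V -> bool).
Definition s' (p q : V * 'I_4) : bool := s p.1 q.1 (+) tt4 p.2 q.2.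

Lemma sa_lex p q : sa (lex_adj adj K4bar_adj) s' p q = sa adj s p.1 q.1 * tau p.2 q.2.
Proof.
rewrite /sa /lex_adj /K4bar_adj andbF orbF /s' /tau.
by case: (adj _ _); rewrite ?mul0r // signr_addb.
Qed.

Lemma square_step (f : V * 'I_4 -> algC) (lam : algC) :
  (forall q, \sum_p f p * sa (lex_adj adj K4bar_adj) s' p q = lam * f q) ->
  forall z k, \sum_x f (x, k) * (\sum_y sa adj s x y * sa adj s y z) * 4
              = lam ^+ 2 * f (z, k).
Proof.
move=> Hf.
have H1 : forall z j, \sum_y \sum_i f (y, i) * (sa adj s y z * tau i j) = lam * f (z, j).
  move=> z j; rewrite -(Hf (z, j)) pair_big /=.
  by apply: eq_bigr => -[y i] _; rewrite sa_lex.
move=> z k.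
apply/esym; rewrite expr2 -mulrA -H1 [LHS]mulr_sumr.
under eq_bigr => y _ do rewrite mulr_sumr.
under eq_bigr => y _ do under eq_bigr => j _ do rewrite mulrA -H1 mulr_suml.
under eq_bigr => y _ do under eq_bigr => j _ do under eq_bigr => x _ do rewrite mulr_suml.
(* now: sum_y sum_j sum_x sum_i f(x,i)*(sa x y * tau i j) * (sa y z * tau j k) *)
under eq_bigr => y _ do rewrite exchange_big.
rewrite exchange_big /=.
under eq_bigr => x _ do under eq_bigr => y _ do rewrite exchange_big.
under eq_bigr => x _ do rewrite exchange_big.
apply: eq_bigr => x _.
transitivity (\sum_i f (x, i) * (\sum_y sa adj s x y * sa adj s y z) *
                       (if i == k then 4 else 0)).
  apply: eq_bigr => i _; rewrite -tau_orth [RHS]mulr_sumr.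
  under [RHS]eq_bigr => j _ do rewrite mulr_sumr mulr_suml.
  rewrite [RHS]exchange_big /=; apply: eq_bigr => y _; apply: eq_bigr => j _.
  ring.
rewrite (bigD1 k) //= eqxx [X in _ + X]big1 ?addr0 // => i /negbTE ->; by rewrite mulr0.
Qed.

Lemma sqrt_step (w : V -> algC) (mu B : algC) :
  (exists x, w x != 0) ->
  (forall z, \sum_x w x * (\sum_y sa adj s x y * sa adj s y z) = mu * w z) ->
  (forall lam, eigenvalue (signed_adj adj s) lam -> `|lam| <= B) ->
  `|sqrtC mu| <= B.
Proof.
move=> [x0 wx0] Hw HB.
set s0 := sqrtC mu.
have s0K : s0 ^+ 2 = mu by rewrite sqrtCK.
clearbody s0.
pose u y := \sum_x w x * sa adj s x y - s0 * w y.
have Hu : forall z, \sum_y u y * sa adj s y z = - s0 * u z.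
  move=> z; rewrite /u.
  under eq_bigr => y _ do rewrite mulrBl mulr_suml.
  rewrite sumrB exchange_big /=.
  have -> : \sum_x \sum_y w x * sa adj s x y * sa adj s y z = mu * w z.
    rewrite -Hw; apply: eq_bigr => x _; rewrite mulr_sumr.
    by apply: eq_bigr => y _; rewrite mulrA.
  under eq_bigr => y _ do rewrite -mulrA.
  rewrite -mulr_sumr -s0K; ring.
case: (classic (exists y, u y != 0)) => [[y uy]|nou].
  rewrite -(normrN s0); apply: HB; apply/eig_fun; exists u; split; first by exists y.
  exact: Hu.
apply: HB; apply/eig_fun; exists w; split; first by exists x0.
move=> z; apply/eqP; rewrite -subr_eq0; apply/eqP.
apply: NNPP => H; apply: nou; exists z; apply/eqP; exact: H.
Qed.
End Main.

Local Close Scope ring_scope.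
Unset Implicit Arguments.

Theorem mainTheorem4 (V : finType) (adj : rel V) (d : nat) :
  simple_graph adj -> (1 < d)%N -> regular adj d ->
  has_good_signing adj d ->
  has_good_signing (lex_adj adj K4bar_adj) (4 * d).
Proof.
Local Open Scope ring_scope.
move=> _ d1 _ [s [sg HB]].
exists (s' s); split.
  move=> p q; rewrite /lex_adj /K4bar_adj andbF orbF => e.
  by rewrite /s' (sg _ _ e) tt4C.
move=> lam /eig_fun [f [[[x0 k0] fx0] Hf]].
have H2 := square_step Hf.
pose mu := lam ^+ 2 / 4.
have Hw : forall z, \sum_x f (x, k0) * (\sum_y sa adj s x y * sa adj s y z) = mu * f (z, k0).
  have n4 : (4 : algC) != 0 by rewrite pnatr_eq0.
  move=> z; apply: (mulIf n4); by rewrite mulr_suml H2 /mu [RHS]mulrAC divfK.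
have Hs := sqrt_step (ex_intro _ x0 fx0) Hw HB.
have dge : (0 : algC) <= d%:R - 1 by rewrite subr_ge0 ler1n ltnW.
have e1 : `|lam| ^+ 2 = 4 * `|sqrtC mu| ^+ 2.
  rewrite -!normrX sqrtCK -[4 in RHS](normr_nat _ 4) -normrM /mu mulrC -mulrA mulVf ?mulr1 //.
  by rewrite pnatr_eq0.
have e2 : `|sqrtC mu| ^+ 2 <= (2 * sqrtC (d%:R - 1)) ^+ 2.
  by rewrite ler_pXn2r // ?nnegrE ?normr_ge0 // mulr_ge0 ?ler0n ?sqrtC_ge0.
rewrite -(ler_pXn2r (n := 2)) // ?nnegrE ?normr_ge0 ?mulr_ge0 ?ler0n ?sqrtC_ge0 //; last first.
  by rewrite subr_ge0 ler1n muln_gt0 /= ltnW.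
apply: (le_trans (y := 4 * (2 * sqrtC (d%:R - 1)) ^+ 2)).
  rewrite [X in X <= _](_ : _ = 4 * `|sqrtC mu| ^+ 2); last exact: e1. exact: (ler_wpM2l (ler0n _ 4) e2).
rewrite exprMn sqrtCK natrM exprMn sqrtCK.
have -> : (2 : algC) ^+ 2 = 4 by rewrite -natrX.
apply: ler_wpM2l; first exact: ler0n.
by rewrite mulrBr mulr1 lerD2l lerN2 ?ler1n ?ler_nat.
Qed.
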